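(* Let $m_0$ be an initial model, $a$ a (comparison-based) black-box optimization algorithm run inside the BBoxER framework described in the context, $\omega$ a fixed random seed, $b\in\mathbb{N}$ a budget, $s$ the dataset size and $\epsilon>0$. Assume that $N(\omega,a,b)$ is finite and that there is $\delta_{1,\epsilon}$ such that for every parameter $x$, $$P_{\omega_D}\big(|\widehat L(x)-L(x)|>\epsilon\big)\le \delta_{1,\epsilon}.$$ Then $$P_{\omega_D}\big(|\widehat L(\widehat x)-L(\widehat x)|>\epsilon\big)\le N(\omega,a,b)\cdot \delta_{1,\epsilon},$$ and $$P_{\omega_D}\Big(\sup_{1\le i\le b}|\widehat L(x_i)-L(x_i)|>\epsilon\Big)\le b\cdot N(\omega,a,b)\cdot \delta_{1,\epsilon}.$$
   Context: BBoxER framework. Fix an initial model $m_0$ and a map $(m_0,x)\mapsto \mathrm{modified}(m_0,x)$ sending a parameter $x$ to a model. Let $\mathcal D$ be the class of datasets $D$ of size $s$ drawn from a probability distribution $F$ on $\mathcal X\times\mathcal Y$; $\omega_D$ denotes the randomness of the draw of $D$. A black-box optimization algorithm $a$, deterministic given its seed $\omega$, is run with budget $b$ on $D$: it is initialized from $\omega$; at each iteration $i=1,\dots,b$ it proposes a parameter $x_i$ and model $m_i=\mathrm{modified}(m_0,x_i)$, declares a finite number $k_i\ge1$ of possible comparison outcomes, then receives $\mathrm{choice}_i\in\{1,\dots,k_i\}$ computed by comparing $m_1,\dots,m_i$ on $D$; after $b$ iterations it recommends $\widehat x$ and outputs $\mathrm{modified}(m_0,\widehat x)$. The algorithm accesses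 $D$ only through the values $\mathrm{choice}_i$, so $x_i$ and $k_i$ are deterministic functions of $(\omega,a,b,\mathrm{choice}_1,\dots,\mathrm{choice}_{i-1})$ and $\widehat x$ is a deterministic function of $(\omega,a,b,\mathrm{choice}_1,\dots,\mathrm{choice}_b)$. The internal state after $b$ iterations is $S(\omega,D,a,b)=(\omega,\mathrm{choice}_1,\dots,\mathrm{choice}_b)$, and $N(\omega,a,b)=\operatorname{Card}\{S(\omega,D,a,b): D\in\mathcal D\}$. $L(x)$ denotes the generalization (expected) error under $F$ of $\mathrm{modified}(m_0,x)$ and $\widehat L(x)$ its empirical error on $D$. *)

(* Defs.v *)
From HB Require Import structures.
From mathcomp Require Import all_boot all_order all_algebra.
From mathcomp Require Import all_classical all_reals all_analysis.
From mathcomp Require Import finmap.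
Set Implicit Arguments. Unset Strict Implicit. Unset Printing Implicit Defensive.
Import Order.TTheory GRing.Theory Num.Theory.
Local Open Scope ring_scope.
Local Open Scope classical_set_scope.
Local Open Scope fset_scope.

(** A black-box optimization algorithm, deterministic given its seed:
    every quantity is a deterministic function of
    (seed, budget b, previous comparison outcomes choice_1..choice_{i-1}). *)
Record bbo_algo (Seed Param : Type) := BBOAlgo {
  propose   : Seed -> nat -> seq nat -> Param;
  kdecl     : Seed -> nat -> seq nat -> nat;
  recommend : Seed -> nat -> seq nat -> Param
}.

Section Run.
Variables (Seed Param Model Dset : Type).
Variables (modified : Model -> Param -> Model) (m0 : Model).
(* [compare k ms D] : outcome in {1..k} of comparing the models ms = [m_1;..;m_i] on D *)
Variable compare : nat -> seq Model -> Dset -> nat.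
Variables (a : bbo_algo Seed Param) (w : Seed) (b : nat).

Definition bbo_models (ch : seq nat) (i : nat) : seq Model :=
  [seq modified m0 (propose a w b (take j ch)) | j <- iota 0 i.+1].

Fixpoint bbo_choices (D : Dset) (i : nat) : seq nat :=
  match i with
  | 0 => [::]
  | i'.+1 =>
      let ch := bbo_choices D i' in
      rcons ch (compare (kdecl a w b ch) (bbo_models ch i') D)
  end.

(* internal state S(w,D,a,b) = (w, choice_1, ..., choice_b); w is fixed,
   so we record the choices only (same cardinality). *)
Definition bbo_state (D : Dset) : seq nat := bbo_choices D b.

(* the parameter x_i, 1 <= i <= b, proposed when running on D *)
Definition bbo_x (D : Dset) (i : nat) : Param :=
  propose a w b (take i.-1 (bbo_state D)).

Definition bbo_xhat (D : Dset) : Param := recommend a w b (bbo_state D).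

(* N(w,a,b) = Card { S(w,D,a,b) : D in \mathcal D } (meaningful when finite) *)
Definition bbo_N (Dclass : set Dset) : nat :=
  (#|` fset_set [set bbo_state D | D in Dclass] |)%N.
End Run.

Section Errors.
Variables (d : measure_display) (T : measurableType d) (R : realType).
Variables (Param Model : Type) (modified : Model -> Param -> Model) (m0 : Model).
Variable loss : Model -> T -> R.
Variable F : probability T R.      (* distribution on X x Y *)
Variable s : nat.

Definition gen_err (x : Param) : R :=
  Rintegral F setT (loss (modified m0 x)).

Definition emp_err (x : Param) (D : s.-tuple T) : R :=
  (s%:R)^-1 * \sum_(j < s) loss (modified m0 x) (tnth D j).
End Errors.

(* The random dataset Dr : Omega -> s.-tuple T consists of s i.i.d. draws
   from F (product rule over every family of measurable sets). *)
Definition iid_dataset (d : measure_display) (T : measurableType d) (R : realType)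
  (dO : measure_display) (Omega : measurableType dO) (P : probability Omega R)
  (F : probability T R) (s : nat) (Dr : Omega -> s.-tuple T) : Prop :=
  (forall j : 'I_s, measurable_fun setT (fun o => tnth (Dr o) j)) /\
  (forall A : 'I_s -> set T, (forall j, measurable (A j)) ->
     P [set o | forall j, A j (tnth (Dr o) j)] = (\prod_(j < s) F (A j))%E).

(* Main.v *)
Require Import Defs.
From HB Require Import structures.
From mathcomp Require Import all_boot all_order all_algebra.
From mathcomp Require Import all_classical all_reals all_analysis.
From mathcomp Require Import finmap.
From mathcomp Require Import measurable_realfun.
Import Order.TTheory GRing.Theory Num.Theory.
Local Open Scope ring_scope.
Local Open Scope classical_set_scope.


Lemma bigmax_gt_ex (R : realType) (e : R) (F : nat -> R) m n :
  0 < e -> e < \big[Order.max/0]_(m <= i < n) F i ->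
  exists2 i, (m <= i < n)%N & e < F i.
Proof.
move=> e0; rewrite big_seq; elim/big_rec: _ => [|i y].
  by move=> /(lt_trans e0); rewrite ltxx.
rewrite mem_index_iota => Hi IH; rewrite lt_max => /orP[H|/IH //].
by exists i.
Qed.

Lemma bigmax_gt_in (R : realType) (e : R) (F : nat -> R) m n i :
  (m <= i < n)%N -> e < F i -> e < \big[Order.max/0]_(m <= i < n) F i.
Proof.
move=> Hi H; apply: (lt_le_trans H); apply: le_bigmax_seq => //.
by rewrite mem_index_iota.
Qed.

Lemma sum_const_fset (R : realType) (T : choiceType) (fs : {fset T}) (c : R) :
  (\sum_(x <- fs) c%:E = ((#|` fs|)%fset%:R * c)%:E)%E.
Proof.
rewrite sumEFin big_const_seq count_predT /=.
congr (_%:E); rewrite -mulr_natl.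
rewrite mulr1; elim: (#|` fs|)%fset => [|k IH] /=; first by rewrite mul0r.
by rewrite IH -addn1 natrD mulrDl mul1r addrC.
Qed.
Theorem theorem1
  (R : realType)
  (dO : measure_display) (Omega : measurableType dO) (P : probability Omega R)
  (d : measure_display) (T : measurableType d) (F : probability T R)
  (Seed Param Model : Type) (modified : Model -> Param -> Model) (m0 : Model)
  (loss : Model -> T -> R) (s : nat) (Dr : Omega -> s.-tuple T)
  (compare : nat -> seq Model -> s.-tuple T -> nat)
  (a : bbo_algo Seed Param) (w : Seed) (b : nat) (eps delta1 : R)
  (Hiid : iid_dataset P F Dr)
  (Hloss : forall m, measurable_fun setT (loss m))
  (Hk : forall b' ch, (0 < kdecl a w b' ch)%N)
  (Hcmp_range : forall k ms D, (0 < k)%N -> (1 <= compare k ms D <= k)%N)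
  (Hcmp_meas : forall k ms c, measurable [set o | compare k ms (Dr o) = c])
  (Heps : 0 < eps)
  (HNfin : finite_set [set bbo_state modified m0 compare a w b D | D in [set: s.-tuple T]])
  (Hdelta : forall x : Param,
     (P [set o | (eps < `| emp_err modified m0 loss x (Dr o) - gen_err modified m0 loss F x |)%R ]
       <= delta1%:E)%E) :
  let N := bbo_N modified m0 compare a w b [set: s.-tuple T] in
  (P [set o | (eps < `| emp_err modified m0 loss (bbo_xhat modified m0 compare a w b (Dr o)) (Dr o)
                      - gen_err modified m0 loss F (bbo_xhat modified m0 compare a w b (Dr o)) |)%R ]
    <= (N%:R * delta1)%:E)%E
  /\
  (P [set o | (eps < \big[Order.max/0]_(1 <= i < b.+1)
               `| emp_err modified m0 loss (bbo_x modified m0 compare a w b (Dr o) i) (Dr o)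
                  - gen_err modified m0 loss F (bbo_x modified m0 compare a w b (Dr o) i) |)%R ]
    <= (b%:R * N%:R * delta1)%:E)%E.
Proof.
move=> N.
set st := bbo_state modified m0 compare a w b.
have mch : forall i ch,
    measurable [set o | bbo_choices modified m0 compare a w b (Dr o) i = ch].
  elim=> [|i IH] ch /=.
    case: ch => [|x ch].
      by rewrite (_ : [set _ | _] = setT) //; apply/seteqP; split.
    by rewrite (_ : [set _ | _] = set0) //; apply/seteqP; split => o //=.
  case/lastP: ch => [|ch y].
    rewrite (_ : [set _ | _] = set0) //; apply/seteqP; split => o //=.
    by move/(congr1 size); rewrite size_rcons.
  rewrite (_ : [set _ | _] =
     [set o | bbo_choices modified m0 compare a w b (Dr o) i = ch] `&`
     [set o | compare (kdecl a w b ch) (bbo_models modified m0 a w b ch i) (Dr o) = y]).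
    exact: measurableI.
  apply/seteqP; split => o /=.
    by move/eqP; rewrite eqseq_rcons => /andP[/eqP E /eqP <-]; rewrite E.
  by case=> E1 E2; rewrite E1 E2.
pose Aset x := [set o | eps < `| emp_err modified m0 loss x (Dr o) - gen_err modified m0 loss F x |].
have mA : forall x, measurable (Aset x).
  move=> x.
  have mf : measurable_fun setT (fun o => `| emp_err modified m0 loss x (Dr o) - gen_err modified m0 loss F x |).
    apply: measurableT_comp => //; apply: measurable_funB => //.
    apply: measurable_funM => //; apply: measurable_sum => j.
    exact: measurableT_comp (Hloss _) (Hiid.1 j).
  have := mf measurableT _ (measurable_itv `]eps, +oo[%O).
  rewrite setTI; congr measurable; apply/seteqP; split => o /=;
    by rewrite in_itv /= andbT.
pose SS := [set st D | D in [set: s.-tuple T]].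
have gen : forall g : seq nat -> Param,
  measurable [set o | eps < `| emp_err modified m0 loss (g (st (Dr o))) (Dr o)
                      - gen_err modified m0 loss F (g (st (Dr o))) |] /\
  (P [set o | (eps < `| emp_err modified m0 loss (g (st (Dr o))) (Dr o)
                      - gen_err modified m0 loss F (g (st (Dr o))) |)%R] <= (N%:R * delta1)%:E)%E.
  move=> g.
  have GE : [set o | eps < `| emp_err modified m0 loss (g (st (Dr o))) (Dr o)
                      - gen_err modified m0 loss F (g (st (Dr o))) |] =
     \bigcup_(c in SS) ([set o | st (Dr o) = c] `&` Aset (g c)).
    apply/seteqP; split => o.
      by move=> Ho; exists (st (Dr o)); [by exists (Dr o)|split].
    by case=> c _ [/= <-].
  have mAc : forall c, SS c -> measurable ([set o | st (Dr o) = c] `&` Aset (g c)).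
    by move=> c _; apply: measurableI; [exact: mch|exact: mA].
  have mG : measurable (\bigcup_(c in SS) ([set o | st (Dr o) = c] `&` Aset (g c))).
    exact: fin_bigcup_measurable.
  rewrite GE; split => //.
  apply: (le_trans (content_sub_fsum P HNfin mAc mG _)); first exact: subset_refl.
  rewrite fsbig_finite //= -[X in (_ <= X)%E]sum_const_fset.
  apply: lee_sum => c _.
  apply: le_trans (Hdelta (g c)).
  by apply: le_measure; [apply/mem_set; apply: measurableI; [exact: (mch b)|exact: mA]|apply/mem_set; exact: mA|exact: subIsetr].
split; first exact: (gen (recommend a w b)).2.
pose gi (i : nat) := fun c : seq nat => propose a w b (take i.-1 c).
pose G i := [set o | eps < `| emp_err modified m0 loss (gi i (st (Dr o))) (Dr o)
                      - gen_err modified m0 loss F (gi i (st (Dr o))) |].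
have E2 : [set o | eps < \big[Order.max/0]_(1 <= i < b.+1)
               `| emp_err modified m0 loss (bbo_x modified m0 compare a w b (Dr o) i) (Dr o)
                  - gen_err modified m0 loss F (bbo_x modified m0 compare a w b (Dr o) i) |] =
          \bigcup_(k in `I_b) G k.+1.
  apply/seteqP; split => o /=.
    move=> /(@bigmax_gt_ex _ _ _ _ _ Heps) [[//|k] /andP[_ Hk0] H].
    by exists k => //.
  by case=> k /= Hk0 H; apply: (@bigmax_gt_in _ _ _ _ _ k.+1).
rewrite E2.
have mGk : forall k, `I_b k -> measurable (G k.+1) by move=> k _; exact: (gen _).1.
apply: (le_trans (content_sub_fsum P (finite_II b) mGk (fin_bigcup_measurable (finite_II b) mGk) _)); first exact: subset_refl.
rewrite -fsbig_ord.
apply: (@le_trans _ _ (\sum_(k < b) (N%:R * delta1)%:E)%E).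
  by apply: lee_sum => k _; exact: (gen (gi k.+1)).2.
rewrite sumEFin lee_fin sumr_const card_ord -mulrA mulr_natl.
by rewrite mulr_natl.
Qed.
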